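(* Let $G=(V,E)$ be a connected locally finite graph with measure $\mu$ and edge weights $w$ as described in the context, and let $m\ge1$ be an integer. Suppose $\mu(x)\ge\mu_0>0$ for all $x\in V$, and let $\mathcal{P}=(p_0,p_1,\dots,p_m)$ with $1\le p_j\le+\infty$ for $j=0,\dots,m$. Then there exists a constant $C$ depending only on $\mu_0$ and $\mathcal{P}$ such that for every $u\in W^{m,\mathcal{P}}(V)$, $$\||\nabla^ju|\|_\infty\le C\|u\|_{W^{m,\mathcal{P}}(V)}\quad\text{for all } j=0,\dots,m.$$ Moreover, for $j\in\{0,\dots,m\}$ such that $1\le p_j<+\infty$, for every $q\in[p_j,+\infty)$ one has $\||\nabla^ju|\|_q\le C\|u\|_{W^{m,\mathcal{P}}(V)}$ for all $u\in W^{m,\mathcal{P}}(V)$, where $C$ depends only on $\mu_0$, $p_j$ and $q$.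
   Context: $G=(V,E)$ is a connected graph with infinitely many vertices in which every vertex has finitely many neighbours; $y\sim x$ means $xy\in E$. A measure $\mu:V\to(0,+\infty)$ is given, and each edge $xy\in E$ carries a weight $w_{xy}>0$. For $u:V\to\mathbb{R}$ define $\Delta u(x)=\frac{1}{\mu(x)}\sum_{y\sim x}w_{xy}(u(y)-u(x))$ and $|\nabla u|(x)=\big(\frac{1}{2\mu(x)}\sum_{y\sim x}w_{xy}(u(y)-u(x))^2\big)^{1/2}$. Integrals are $\int_V f\,d\mu=\sum_{x\in V}\mu(x)f(x)$; $\|f\|_p=(\int_V|f|^pd\mu)^{1/p}$ for $1\le p<\infty$ and $\|f\|_\infty=\sup_{x\in V}|f(x)|$. Set $\Delta^0u=u$, $\Delta^ku=\Delta(\Delta^{k-1}u)$, and $|\nabla^j u|=|\Delta^k u|$ if $j=2k$, $|\nabla^ju|=|\nabla(\Delta^ku)|$ if $j=2k+1$. For $\mathcal{P}=(p_0,\dots,p_m)$ with $p_j\ge1$, $W^{m,\mathcal{P}}(V)=\{u:V\to\mathbb{R}:\sum_{j=0}^m\||\nabla^ju|\|_{p_j}<+\infty\}$ with norm $\|u\|_{W^{m,\mathcal{P}}(V)}=\sum_{j=0}^m\||\nabla^ju|\|_{p_j}$. *)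

(* Defs.v *)
From mathcomp Require Import all_boot all_order all_algebra.
From mathcomp Require Import all_classical all_reals all_analysis.
From Stdlib Require Import Relations.
Set Implicit Arguments. Unset Strict Implicit. Unset Printing Implicit Defensive.
Import Order.TTheory GRing.Theory Num.Theory.
Local Open Scope classical_set_scope.
Local Open Scope ring_scope.

Definition weighted_graph (R : realType) (V : choiceType)
  (adj : V -> V -> Prop) (w : V -> V -> R) (mu : V -> R) : Prop :=
  (forall x y, adj x y -> adj y x) /\
  (forall x, finite_set [set y | adj x y]) /\
  (forall x y, clos_refl_trans V adj x y) /\
  infinite_set [set: V] /\
  (forall x y, adj x y -> w x y = w y x /\ 0 < w x y) /\
  (forall x, 0 < mu x).

Section Ops.
Variables (R : realType) (V : choiceType) (adj : V -> V -> Prop)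
  (w : V -> V -> R) (mu : V -> R).

Definition glap (u : V -> R) : V -> R :=
  fun x => (mu x)^-1 * \sum_(y \in [set y | adj x y]) w x y * (u y - u x).

Definition ggrad (u : V -> R) : V -> R :=
  fun x => Num.sqrt ((2 * mu x)^-1 *
             \sum_(y \in [set y | adj x y]) w x y * (u y - u x) ^+ 2).

Definition gnabla (j : nat) (u : V -> R) : V -> R :=
  if odd j then ggrad (iter j./2 glap u)
  else fun x => `| iter j./2 glap u x |.

Definition lpnorm (p : \bar R) (f : V -> R) : \bar R :=
  match p with
  | r%:E => ((\esum_(x in [set: V]) (mu x * `|f x| `^ r)%:E)
              `^ r^-1)%E
  | +oo%E => ereal_sup (range (fun x => (`|f x|)%:E))
  | -oo%E => 0%E
  end.

Definition sobnorm (m : nat) (P : 'I_m.+1 -> \bar R) (u : V -> R) : \bar R :=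
  (\sum_(j < m.+1) lpnorm (P j) (gnabla j u))%E.

End Ops.

(* Main.v *)
Require Import Defs.
From mathcomp Require Import all_boot all_order all_algebra.
From mathcomp Require Import all_classical all_reals all_analysis.
From mathcomp Require Import ring lra.
Import Order.TTheory GRing.Theory Num.Theory.
Local Open Scope classical_set_scope.
Local Open Scope ring_scope.

Section Aux.
Variable R : realType.

Lemma esum_scale (T : choiceType) (k : R) (a : T -> \bar R) :
  0 <= k -> (forall i, 0 <= a i)%E ->
  (\esum_(i in [set: T]) (k%:E * a i) <= k%:E * \esum_(i in [set: T]) a i)%E.
Proof.
move=> k0 a0; apply: ge_ereal_sup => _ [X XI <-].
rewrite -ge0_mule_fsumr //; apply: lee_wpmul2l; first by rewrite lee_fin.
by apply: esum_ge; exists X.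
Qed.

Lemma esum_term (T : choiceType) (a : T -> \bar R) x :
  (forall i, 0 <= a i)%E -> (a x <= \esum_(i in [set: T]) a i)%E.
Proof.
move=> a0; apply: esum_ge; exists [set x]; first by split => //; exact: finite_set1.
by rewrite fsbig_set1.
Qed.

Lemma powR_le1K (b e : R) : 0 < b -> 0 <= e <= 1 -> b `^ e <= 1 + b.
Proof.
move=> b0 /andP[e0 e1].
apply: (@le_trans _ _ ((1+b) `^ e)).
  by apply: ge0_ler_powR => //; rewrite ?nnegrE; lra.
rewrite -[leRHS](@powRr1 _ (1+b)); last lra.
by apply: ler_powR => //; lra.
Qed.

Lemma pt_bound (mx mu0 fx p s : R) : 0 < mu0 -> mu0 <= mx -> 1 <= p ->
  mx * fx `^ p <= s -> 0 <= fx ->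
  fx <= (mu0^-1) `^ (p^-1) * s `^ (p^-1).
Proof.
move=> m0 mx0 p1 h fx0.
have hs : 0 <= s.
  by apply: le_trans h; rewrite mulr_ge0 ?powR_ge0 //; lra.
have hp : fx `^ p <= mu0^-1 * s.
  have h2 : mu0 * fx `^ p <= s.
    apply: le_trans h; apply: ler_wpM2r => //; exact: powR_ge0.
  by rewrite -(ler_pM2l m0) mulrA mulfV ?mul1r // gt_eqF.
have -> : fx = (fx `^ p) `^ p^-1.
  by rewrite -powRrM mulfV ?powRr1 // gt_eqF //; lra.
rewrite -powRM; last first.
- exact: hs.
- by rewrite invr_ge0 ltW.
apply: ge0_ler_powR => //; rewrite ?nnegrE ?invr_ge0; try lra.
- exact: powR_ge0.
- by rewrite mulr_ge0 // ?invr_ge0 ?ltW.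
Qed.

Lemma K_gt0 (mu0 : R) : 0 < mu0 -> 0 < 1 + mu0^-1.
Proof. by move=> m0; have := invr_gt0 mu0; rewrite m0 => /esym h; lra. Qed.

Lemma pinv01 (p : R) : 1 <= p -> 0 <= p^-1 <= 1.
Proof.
move=> p1; rewrite invr_ge0 (_ : 0 <= p) ?andTb; last lra.
by rewrite invf_le1 //; lra.
Qed.

Lemma lp_pt (V : choiceType) (mu : V -> R) (mu0 : R) (f : V -> R) (p : R) x :
  0 < mu0 -> (forall x, mu0 <= mu x) -> 1 <= p ->
  ((`|f x|)%:E <= (1 + mu0^-1)%:E * lpnorm mu p%:E f)%E.
Proof.
move=> m0 hm p1; rewrite /lpnorm.
have a0 : forall i, (0 <= (mu i * `|f i| `^ p)%:E)%E.
  by move=> i; rewrite lee_fin mulr_ge0 ?powR_ge0 //; apply: le_trans (hm i); lra.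
have ht := @esum_term _ _ x a0.
have S0 := esum_ge0 (S:=[set: V]) (fun i _ => a0 i).
move: ht S0; case: (esum [set: V] _) => [s| |] ht S0 //.
- rewrite poweR_EFin -EFinM lee_fin.
  rewrite lee_fin in ht.
  apply: le_trans (pt_bound _ _ _ _ _ m0 (hm x) p1 ht (normr_ge0 _)) _.
  apply: ler_wpM2r; first exact: powR_ge0.
  by apply: powR_le1K; [rewrite invr_gt0 | exact: pinv01].
- rewrite poweRyr; last by rewrite invr_neq0 // gt_eqF //; lra.
  by rewrite muleC gt0_mulye ?leey // lte_fin K_gt0.
Qed.

Lemma lp_inf (V : choiceType) (mu : V -> R) (mu0 : R) (f : V -> R) (p : R) :
  0 < mu0 -> (forall x, mu0 <= mu x) -> 1 <= p ->
  (lpnorm mu +oo f <= (1 + mu0^-1)%:E * lpnorm mu p%:E f)%E.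
Proof.
move=> m0 hm p1; rewrite {1}/lpnorm; apply: ge_ereal_sup => _ [x _ <-].
exact: lp_pt.
Qed.

Lemma lp_q (V : choiceType) (mu : V -> R) (mu0 : R) (f : V -> R) (p q : R) :
  0 < mu0 -> (forall x, mu0 <= mu x) -> 1 <= p -> p <= q ->
  (lpnorm mu q%:E f <= (1 + mu0^-1)%:E * lpnorm mu p%:E f)%E.
Proof.
move=> m0 hm p1 pq; rewrite /lpnorm.
have a0 : forall r i, (0 <= (mu i * `|f i| `^ r)%:E)%E.
  by move=> r i; rewrite lee_fin mulr_ge0 ?powR_ge0 //; apply: le_trans (hm i); lra.
have ht := fun x => @esum_term _ _ x (a0 p).
have S0 := esum_ge0 (S:=[set: V]) (fun i _ => a0 p i).
have Sq0 := esum_ge0 (S:=[set: V]) (fun i _ => a0 q i).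
move: ht S0; case Es: (esum [set: V] (fun i => (mu i * `|f i| `^ p)%:E)) => [s| |] ht S0 //; last first.
  rewrite [X in (_ <= _ * X)%E]poweRyr; last by rewrite invr_neq0 // gt_eqF //; lra.
  by rewrite muleC gt0_mulye ?leey // lte_fin K_gt0.
set c := (mu0^-1) `^ p^-1; set N := s `^ p^-1.
have hb : forall x, `|f x| <= c * N.
  move=> x; have := ht x; rewrite lee_fin => htx.
  exact: (pt_bound _ _ _ _ _ m0 (hm x) p1 htx (normr_ge0 _)).
have c0 : 0 <= c by exact: powR_ge0.
have N0 : 0 <= N by exact: powR_ge0.
have hq : (\esum_(i in [set: V]) (mu i * `|f i| `^ q)%:E <= (((c*N) `^ (q-p)) * s)%:E)%E.
  apply: (@le_trans _ _ (\esum_(i in [set: V]) (((c*N) `^ (q-p))%:E * (mu i * `|f i| `^ p)%:E))%E).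
    apply: le_esum => i _; rewrite -EFinM lee_fin.
    have -> : `|f i| `^ q = `|f i| `^ (q-p) * `|f i| `^ p.
      rewrite -powRD; first by congr (_ `^ _); rewrite subrK.
      by apply/implyP => /eqP h; exfalso; rewrite subrK in h; lra.
    rewrite mulrA [mu i * _]mulrC -mulrA.
    apply: ler_wpM2r; first by rewrite mulr_ge0 ?powR_ge0 //; apply: le_trans (hm i); lra.
    apply: ge0_ler_powR; rewrite ?nnegrE ?mulr_ge0 //; lra.
  apply: le_trans (esum_scale _ _ _ (powR_ge0 _ _) (a0 p)) _.
  by rewrite Es EFinM.
move: hq Sq0; case: (esum [set: V] (fun i => (mu i * `|f i| `^ q)%:E)) => [sq| |] hq Sq0 //.
rewrite !poweR_EFin -EFinM lee_fin.
rewrite lee_fin in hq Sq0. rewrite lee_fin in S0.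
apply: (@le_trans _ _ (((c*N) `^ (q-p) * s) `^ q^-1)).
  apply: ge0_ler_powR; rewrite ?nnegrE ?mulr_ge0 ?powR_ge0 ?invr_ge0 //; lra.
have qn0 : q != 0 by rewrite gt_eqF //; lra.
have pn0 : p != 0 by rewrite gt_eqF //; lra.
have -> : ((c*N) `^ (q-p) * s) `^ q^-1 = (mu0^-1) `^ (p^-1 - q^-1) * N.
  rewrite powRM ?powR_ge0 // powRM ?powR_ge0 // powRM ?powR_ge0 ?mulr_ge0 // /c /N -!powRrM.
  have ee : p^-1 * ((q-p)/q) + q^-1 = p^-1.
    by field; rewrite ?pn0 ?qn0.
  rewrite -mulrA -powRD; last by rewrite ee invr_eq0 (negbTE pn0).
  rewrite ee (_ : p^-1 * ((q-p)/q) = p^-1 - q^-1) //.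
  by field; rewrite ?pn0 ?qn0.
apply: ler_wpM2r => //; apply: powR_le1K; first by rewrite invr_gt0.
have e1 : p^-1 - q^-1 = p^-1 * (q - p) * q^-1.
  by field; rewrite ?pn0 ?qn0.
apply/andP; split.
  rewrite e1 mulr_ge0 // ?mulr_ge0 ?invr_ge0 //; lra.
have := pinv01 _ p1; have : 0 <= q^-1 by rewrite invr_ge0; lra.
move=> h /andP[_ h2]; lra.
Qed.

Lemma lp_ge0 (V : choiceType) (mu : V -> R) (f : V -> R) (P : \bar R) :
  (exists x : V, True) -> (1 <= P)%E -> (0 <= lpnorm mu P f)%E.
Proof.
move=> [x _]; case: P => [r| |] // _; rewrite /lpnorm.
- exact: poweR_ge0.
- apply: le_trans (ereal_sup_ubound (x := (`|f x|)%:E) _); first by rewrite lee_fin.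
  by exists x.
Qed.

Lemma le_sob (m : nat) (P : 'I_m.+1 -> \bar R) (V : choiceType) adj w (mu : V -> R)
  (u : V -> R) (j : 'I_m.+1) :
  (exists x : V, True) -> (forall i, 1 <= P i)%E ->
  (lpnorm mu (P j) (gnabla adj w mu j u) <= sobnorm adj w mu P u)%E.
Proof.
move=> ne hP; rewrite /sobnorm (bigD1 j) //=.
apply: leeDl; apply: sume_ge0 => i _; exact: lp_ge0.
Qed.
End Aux.

Lemma nonempty_of_graph (R : realType) (V : choiceType) adj (w : V -> V -> R) mu :
  weighted_graph adj w mu -> exists x : V, True.
Proof.
move=> [_ [_ [_ [hinf _]]]].
case: (pselect (exists x : V, True)) => // hne; exfalso; apply: hinf.
rewrite (_ : [set: V] = set0); first exact: finite_set0.
by apply/seteqP; split => x //= _; apply: hne; exists x.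
Qed.

Theorem theorem1p5 (R : realType) (mu0 : R) (hmu0 : 0 < mu0) :
  (* Part 1: C depends only on mu0 and P *)
  (forall (m : nat) (P : 'I_m.+1 -> \bar R),
     (1 <= m)%N -> (forall j, 1%E <= P j)%E ->
     exists C : R,
       forall (V : choiceType) (adj : V -> V -> Prop) (w : V -> V -> R) (mu : V -> R),
         weighted_graph adj w mu -> (forall x, mu0 <= mu x) ->
         forall u : V -> R, (sobnorm adj w mu P u < +oo)%E ->
           forall j : 'I_m.+1,
             (lpnorm mu +oo (gnabla adj w mu j u) <= C%:E * sobnorm adj w mu P u)%E)
  /\
  (* Part 2: C depends only on mu0, p_j and q *)
  (forall p q : R, 1 <= p -> p <= q ->
     exists C : R,
       forall (m : nat) (P : 'I_m.+1 -> \bar R) (j : 'I_m.+1),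
         (1 <= m)%N -> (forall i, 1%E <= P i)%E -> P j = p%:E ->
         forall (V : choiceType) (adj : V -> V -> Prop) (w : V -> V -> R) (mu : V -> R),
           weighted_graph adj w mu -> (forall x, mu0 <= mu x) ->
           forall u : V -> R, (sobnorm adj w mu P u < +oo)%E ->
             (lpnorm mu q%:E (gnabla adj w mu j u) <= C%:E * sobnorm adj w mu P u)%E).
Proof.
have K0 : (0 <= (1 + mu0^-1)%:E)%E by rewrite lee_fin ltW // K_gt0.
split.
- move=> m P _ hP; exists (1 + mu0^-1) => V adj w mu hg hm u _ j.
  have ne := nonempty_of_graph _ _ _ _ _ hg.
  apply: le_trans (lee_wpmul2l K0 (le_sob _ _ _ _ _ _ _ _ j ne hP)).
  have := hP j; case: (P j) => [r| |] hr.
  + by apply: lp_inf => //; rewrite lee_fin in hr.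
  + apply: lee_pemull; first exact: lp_ge0.
    rewrite lee_fin; have := invr_gt0 mu0; rewrite hmu0 => /esym h; lra.
  + by exfalso; move: hr; rewrite leeNy_eq.
- move=> p q p1 pq; exists (1 + mu0^-1) => m P j _ hP Pj V adj w mu hg hm u _.
  have ne := nonempty_of_graph _ _ _ _ _ hg.
  apply: le_trans (lee_wpmul2l K0 (le_sob _ _ _ _ _ _ _ _ j ne hP)).
  rewrite Pj; exact: lp_q.
Qed.
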